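(* Let $G$ be a star graph on $n+1$ vertices (one center vertex adjacent to $n$ leaves and no other edges), and let $\Delta$ be the Stanley–Reisner complex of $\mathcal{F}(G)$ (the independence complex of $G$). Then $$\mu_2(\Delta,t)=t^2\sum_{i=1}^{n-2}\binom{n}{i+2}t^i=t^2\sum_{i=1}^{n-2}f_{i+1}t^i,$$ where $f_k$ is the number of $k$-dimensional faces of $\Delta$.
   Context: For a graph $G$ on $[N]$, $\mathcal{F}(G)=(x_ix_j:\{i,j\}\in E(G))\subset\mathbb{K}[x_1,\dots,x_N]$; its Stanley–Reisner complex is the simplicial complex whose faces are the sets $\tau$ with $x_\tau=\prod_{j\in\tau}x_j\notin\mathcal{F}(G)$ (the independent sets). For an ideal $I$, the $m$-th symbolic defect is $\mathrm{sdefect}(I,m)=\mu(I^{(m)}/I^m)$, where $\mu$ is the minimal number of generators and, for squarefree monomial $I$, $I^{(m)}=\bigcap_{P\in\mathrm{Ass}(I)}P^m$. For a $d$-dimensional simplicial complex $\Delta$, let $\Delta^{[i]}$ be the simplicial complex whose facets are the $i$-dimensional faces of $\Delta$, and $\mathcal{F}(\Delta^{[i]})$ its facet ideal (generated by $x_\sigma$ for $\sigma$ an $i$-face). The $m$-th symbolic defect polynomial is $\mu_m(\Delta,t)=t^2\sum_{i=1}^{d-1}\mathrm{sdefect}(\mathcal{F}(\Delta^{[i]}),m)\,t^i$. *)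

(* Defs.v *)
(* Squarefree monomial ideals in K[x_0..x_{N-1}] are encoded
   combinatorially: a monomial is its exponent vector 'I_N -> nat, a squarefree
   monomial x_sigma is the indicator of sigma : {set 'I_N}, and a squarefree
   monomial ideal is given by its (finite) set of squarefree generators. *)
From HB Require Import structures.
From mathcomp Require Import all_boot all_order all_algebra.
Set Implicit Arguments. Unset Strict Implicit. Unset Printing Implicit Defensive.
Import Order.TTheory GRing.Theory Num.Theory.

Section Monomial.
Variable N : nat.

Definition sqf (s : {set 'I_N}) : 'I_N -> nat := fun j => (j \in s : nat).

Definition inI (E : {set {set 'I_N}}) (a : 'I_N -> nat) : bool :=
  [exists s in E, [forall j, sqf s j <= a j]].

(* membership of x^a in the ordinary power I^m: x^a is divisible by a product
   of m generators *)
Definition inIpow (E : {set {set 'I_N}}) (m : nat) (a : 'I_N -> nat) : bool :=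
  [exists t : m.-tuple {set 'I_N},
     all (fun s => s \in E) t &&
     [forall j, \sum_(s <- t) sqf s j <= a j]].

(* vertex covers / minimal vertex covers of the generator hypergraph;
   the associated primes of the squarefree monomial ideal are the
   P_C = (x_j : j in C) for C a minimal vertex cover *)
Definition is_cover (E : {set {set 'I_N}}) (C : {set 'I_N}) : bool :=
  [forall s in E, s :&: C != set0].
Definition is_mincover (E : {set {set 'I_N}}) (C : {set 'I_N}) : bool :=
  is_cover E C && [forall D : {set 'I_N}, (D \proper C) ==> ~~ is_cover E D].

(* membership of x^a in I^(m) = \bigcap_{P in Ass I} P^m *)
Definition inIsym (E : {set {set 'I_N}}) (m : nat) (a : 'I_N -> nat) : bool :=
  [forall C : {set 'I_N}, is_mincover E C ==> (m <= \sum_(j in C) a j)].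

Definition decr (a : 'I_N -> nat) (j : 'I_N) : 'I_N -> nat :=
  fun k => a k - (k == j).

Definition mingen_sym (E : {set {set 'I_N}}) (m : nat) (a : 'I_N -> nat) : bool :=
  inIsym E m a && [forall j, (0 < a j) ==> ~~ inIsym E m (decr a j)].

(* sdefect(I, m) = mu(I^(m)/I^m) = number of minimal monomial generators of
   I^(m) not lying in I^m.  Every such generator has all exponents <= m, so we
   may range over exponent vectors with entries in 'I_m.+1. *)
Definition sdefect (E : {set {set 'I_N}}) (m : nat) : nat :=
  #|[set a : {ffun 'I_N -> 'I_m.+1} |
      mingen_sym E m (fun j => val (a j)) && ~~ inIpow E m (fun j => val (a j))]|.

Definition edge_gens (e : rel 'I_N) : {set {set 'I_N}} :=
  [set s : {set 'I_N} | [exists i, [exists j, [&& i != j, e i j & s == [set i; j]]]]].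

Definition SRcomplex (E : {set {set 'I_N}}) : pred {set 'I_N} :=
  fun t => ~~ inI E (sqf t).

Definition cdim (D : pred {set 'I_N}) : nat := (\max_(s | D s) #|s|).-1.

Definition iface_gens (D : pred {set 'I_N}) (i : nat) : {set {set 'I_N}} :=
  [set s | D s & #|s| == i.+1].

Definition fnum (D : pred {set 'I_N}) (k : nat) : nat := #|iface_gens D k|.

Definition mu_poly (m : nat) (D : pred {set 'I_N}) : {poly int} :=
  'X^2 * \sum_(1 <= i < cdim D) (sdefect (iface_gens D i) m)%:R *: 'X^i.

End Monomial.

Definition star (n : nat) (c : 'I_n.+1) : rel 'I_n.+1 :=
  fun u v => (u == c) != (v == c).

(* Main.v *)
Require Import Defs.
From mathcomp Require Import all_boot all_order all_algebra zify.
Set Implicit Arguments. Unset Strict Implicit. Unset Printing Implicit Defensive.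

Lemma exists_sub (T : finType) (B : {set T}) k :
  k <= #|B| -> exists2 A : {set T}, A \subset B & #|A| = k.
Proof.
elim: k => [|k IH] hk; first by exists set0; rewrite ?sub0set ?cards0.
have [A hAB hA] := IH (ltnW hk).
have : B :\: A != set0.
  apply/negP => /eqP h.
  have := cardsID A B; rewrite h cards0 addn0 => h2.
  have : #|B :&: A| <= #|A| by apply: subset_leq_card; apply: subsetIr.
  by rewrite h2 hA leqNgt hk.
case/set0Pn => x; rewrite inE => /andP[xA xB].
exists (x |: A); first by rewrite subUset sub1set xB hAB.
by rewrite cardsU1 xA hA.
Qed.

Lemma sum_sub (T : finType) (D C : {set T}) (a : T -> nat) :
  D \subset C -> \sum_(j in D) a j <= \sum_(j in C) a j.
Proof.
move=> h; rewrite [X in _ <= X](big_setID D) /= (setIidPr h); exact: leq_addr.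
Qed.

Lemma sum_ind (T : finType) (C s : {set T}) :
  \sum_(j in C) (j \in s : nat) = #|C :&: s|.
Proof.
rewrite -sum1_card (big_setID s) /=.
rewrite [X in _ + X]big1 ?addn0; last by move=> j; rewrite inE => /andP[/negbTE -> _].
by apply: eq_bigr => j; rewrite inE => /andP[_ ->].
Qed.

Section Gen.
Variable N : nat.
Implicit Types (E : {set {set 'I_N}}) (a b : 'I_N -> nat).

Lemma inIsym_ext E m a b : a =1 b -> inIsym E m a = inIsym E m b.
Proof.
move=> h; apply: eq_forallb => C; congr (_ ==> _); congr (_ <= _).
by apply: eq_bigr => j _; rewrite h.
Qed.

Lemma mingen_ext E m a b : a =1 b -> mingen_sym E m a = mingen_sym E m b.
Proof.
move=> h; rewrite /mingen_sym (inIsym_ext _ _ h); congr (_ && _).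
apply: eq_forallb => j; rewrite h; congr (_ ==> ~~ _).
by apply: inIsym_ext => x; rewrite /decr h.
Qed.

Lemma inIpow_ext E m a b : a =1 b -> inIpow E m a = inIpow E m b.
Proof.
move=> h; apply: eq_existsb => t; congr (_ && _); apply: eq_forallb => j.
by rewrite h.
Qed.

Lemma symP E m a :
  reflect (forall C, is_cover E C -> m <= \sum_(j in C) a j) (inIsym E m a).
Proof.
apply: (iffP forallP) => h C.
  move=> hC; have [D hD hDC] := minset_exists hC.
  apply: leq_trans (sum_sub a hDC).
  move/minsetP: hD => [hD1 hD2].
  apply: (implyP (h D)); rewrite /is_mincover hD1 /=.
  apply/forallP => D'; apply/implyP; rewrite properE => /andP[h1 h2].
  apply/negP => hc; move: h2; by rewrite (hD2 _ hc h1) subxx.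
apply/implyP => /andP[hC _]; exact: h.
Qed.

End Gen.

Section Star.
Variables (n : nat) (c : 'I_n.+1).
Local Notation L := [set~ c].
Definition V (k : nat) : {set {set 'I_n.+1}} := [set s : {set 'I_n.+1} | (s \subset L) && (#|s| == k)].

Lemma cardL : #|L| = n.
Proof. by rewrite cardsC1 card_ord. Qed.

Lemma cover_iff k C : is_cover (V k) C = (#|L :\: C| < k).
Proof.
apply/idP/idP.
  move=> hC; rewrite ltnNge; apply/negP => hk.
  have [A hA hAk] := exists_sub hk.
  have hAV : A \in V k.
    by rewrite inE hAk eqxx andbT (subset_trans hA (subsetDl _ _)).
  move/forallP/(_ A)/implyP/(_ hAV)/negP: hC; apply; apply/eqP/setP => x.
  rewrite !inE; apply/negP => /andP[xA xC].
  by move/subsetP: hA => /(_ x xA); rewrite inE xC.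
move=> hk; apply/forallP => s; apply/implyP; rewrite inE => /andP[hs /eqP hsk].
apply/negP => /eqP h0.
have : s \subset L :\: C.
  apply/subsetP => x xs; rewrite inE (subsetP hs x xs) andbT.
  apply/negP => xC; have : x \in s :&: C by rewrite inE xs xC.
  by rewrite h0 inE.
by move/subset_leq_card; rewrite hsk leqNgt hk.
Qed.

Lemma symV k (a : 'I_n.+1 -> nat) :
  reflect (forall C, #|L :\: C| < k -> 2 <= \sum_(j in C) a j) (inIsym (V k) 2 a).
Proof.
apply: (iffP (symP _ _ _)) => h C hC; apply: h; by rewrite ?cover_iff // -cover_iff.
Qed.

Lemma symV_neg k (a : 'I_n.+1 -> nat) : ~~ inIsym (V k) 2 a ->
  exists2 C, #|L :\: C| < k & \sum_(j in C) a j < 2.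
Proof.
move=> h.
case: (boolP [exists C, (#|L :\: C| < k) && (\sum_(j in C) a j < 2)]).
  by case/existsP => C /andP[h1 h2]; exists C.
move/existsPn => hn; exfalso; move/negP: h; apply; apply/symV => C hC.
by move: (hn C); rewrite hC /= -leqNgt.
Qed.

Lemma sym_big k (s : {set 'I_n.+1}) : s \subset L -> k < #|s| -> inIsym (V k) 2 (sqf s).
Proof.
move=> hs hk; apply/symV => C hC; rewrite /sqf sum_ind setIC.
have h1 : #|s :\: C| < k.
  apply: leq_ltn_trans hC; apply: subset_leq_card; exact: setSD.
move: hk; rewrite -(cardsID C s); move: (#|s :&: C|) (#|s :\: C|) h1 => p q; lia.
Qed.

Lemma sym_small k (s : {set 'I_n.+1}) : 0 < k -> #|s| <= k -> ~~ inIsym (V k) 2 (sqf s).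
Proof.
move=> hk hs; apply/negP => /symV h.
case: (set_0Vmem s) => [s0|[x xs]].
  have := h setT; rewrite setDT cards0 /sqf sum_ind setTI s0 cards0.
  by move/(_ hk).
set C := ~: (s :\ x).
have hC : #|L :\: C| < k.
  have : L :\: C \subset s :\ x.
    apply/subsetP => y; rewrite !inE negbK; by case/andP => ->.
  move/subset_leq_card => h1; apply: leq_ltn_trans h1 _.
  move: hs; rewrite (cardsD1 x s) xs add1n; move: (#|s :\ x|) => p; lia.
have := h C hC; rewrite /sqf sum_ind.
have : C :&: s \subset [set x].
  apply/subsetP => y; rewrite !inE negb_and negbK.
  by move=> /andP[/orP[-> //|/negP h1] h2].
move/subset_leq_card; rewrite cards1 => h1 h2; by have := leq_trans h2 h1.
Qed.

Lemma decr_ind (s : {set 'I_n.+1}) j : j \in s -> decr (sqf s) j =1 sqf (s :\ j).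
Proof.
move=> hj x; rewrite /decr /sqf !inE.
case: (eqVneq x j) => [->|hne] /=; by rewrite ?hj ?subn0.
Qed.

Lemma not_pow k (s : {set 'I_n.+1}) : 1 < k -> #|s| = k.+1 -> ~~ inIpow (V k) 2 (sqf s).
Proof.
move=> hk hs; apply/existsP => [[t /andP[hall /forallP hle]]].
move: hall hle; case: t => [[|x [|y [|? ?]]] //= _].
rewrite !inE andbT => /andP[/andP[_ /eqP hx] /andP[_ /eqP hy]] hle.
have hle' j : (j \in x : nat) + (j \in y : nat) <= (j \in s : nat).
  by move: (hle j); rewrite big_cons big_cons big_nil addn0.
have hI : x :&: y = set0.
  apply/setP => j; rewrite !inE; move: (hle' j).
  by case: (j \in x); case: (j \in y); case: (j \in s).
have hU : x :|: y \subset s.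
  apply/subsetP => j; rewrite !inE; move: (hle' j).
  by case: (j \in x); case: (j \in y); case: (j \in s).
move/subset_leq_card: hU; rewrite cardsU hI cards0 hx hy hs; lia.
Qed.

Lemma pow_of k (t : {set 'I_n.+1}) a : t \in V k -> (forall x, x \in t -> 2 <= a x) ->
  inIpow (V k) 2 a.
Proof.
move=> ht ha; apply/existsP; exists [tuple t; t]; rewrite /= ht /=.
apply/forallP => x; rewrite big_cons big_cons big_nil addn0 /sqf.
by case: (boolP (x \in t)) => h //=; exact: ha.
Qed.


Lemma mingen_char k (a : 'I_n.+1 -> nat) : 1 < k -> (forall j, a j <= 2) ->
  mingen_sym (V k) 2 a -> ~~ inIpow (V k) 2 a ->
  exists2 s, s \in V k.+1 & a =1 sqf s.
Proof.
move=> hk h2 /andP[hsymb /forallP hmin] hpow.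
have hmin' j : 0 < a j -> ~~ inIsym (V k) 2 (decr a j).
  by move=> hj; exact: (implyP (hmin j) hj).
have /symV hsym := hsymb.
have hc : a c = 0.
  apply/eqP; rewrite eqn0Ngt; apply/negP => hc.
  move/negP: (hmin' c hc); apply; apply/symV => C hC.
  have e : L :\: (C :\ c) = L :\: C.
    by apply/setP => x; rewrite !inE; case: (x \in C); case: (x == c).
  have := hsym (C :\ c); rewrite e => /(_ hC) h.
  apply: leq_trans (sum_sub _ (subsetDl C [set c])).
  apply: (leq_trans h); rewrite leq_eqVlt; apply/orP; left; apply/eqP.
  apply: eq_bigr => x; rewrite !inE => /andP[hx _].
  by rewrite /decr (negbTE hx) subn0.
have h1 : forall j, a j <= 1.
  move=> j; rewrite leqNgt; apply/negP => hj.
  have aj : a j = 2 by apply/eqP; rewrite eqn_leq h2 hj.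
  have jc : j != c by apply/eqP => e; move: hj; rewrite e hc.
  have [C hC hs] := symV_neg (hmin' j (ltnW hj)).
  have jC : j \in C.
    apply/negPn/negP => jC; move: hs.
    rewrite (eq_bigr a); first by rewrite ltnNge hsym.
    move=> x xC; rewrite /decr; case: (eqVneq x j) => [e|]; last by rewrite subn0.
    by move: xC; rewrite e (negbTE jC).
  move: hs; rewrite (big_setD1 _ jC) /= {1}/decr eqxx aj /=.
  rewrite (eq_bigr a); last first.
    by move=> x; rewrite !inE => /andP[hx _]; rewrite /decr (negbTE hx) subn0.
  move=> hs.
  have h0 : \sum_(i in C :\ j) a i = 0.
    by move: hs; move: (\sum_(i in C :\ j) a i) => p; lia.
  have a0 : forall x, x \in C :\ j -> a x = 0.
    move=> x hx; apply/eqP; rewrite -leqn0 -h0.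
    have := sum_sub a (_ : [set x] \subset C :\ j); rewrite big_set1; apply.
    by rewrite sub1set.
  set U := L :\: C.
  have hU2 : forall x, x \in U -> 2 <= a x.
    move=> x xU.
    have xC : x \notin C by move: xU; rewrite inE => /andP[].
    have xj : x != j by apply/eqP => e; move: xC; rewrite e jC.
    set C2 := (x |: C) :\ j.
    have hC2 : #|L :\: C2| < k.
      have : L :\: C2 \subset j |: (U :\ x).
        apply/subsetP => y; rewrite !inE.
        by case: (y == j); case: (y == x); case: (y \in C); case: (y == c).
      move/subset_leq_card => hh; apply: leq_ltn_trans hh _.
      rewrite cardsU1; have := leq_b1 (j \notin U :\ x).
      move: hC; rewrite /U (cardsD1 x (L :\: C)) -/U xU add1n.
      move: (j \notin U :\ x : nat) (#|U :\ x|) => p q; lia.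
    have := hsym C2 hC2.
    have xC2 : x \in C2 by rewrite !inE xj eqxx.
    rewrite (big_setD1 _ xC2) /= big1 ?addn0 //.
    move=> y; rewrite !inE => /andP[yx /andP[yj /orP[]]]; first by rewrite (negbTE yx).
    by move=> yC; apply: a0; rewrite !inE yj yC.
  have jU : j \notin U by rewrite inE jC.
  have hUk : k <= #|j |: U|.
    rewrite leqNgt; apply/negP => hlt.
    have e : L :\: (C :\ j) = j |: U.
      apply/setP => y; rewrite !inE.
      case: (eqVneq y j) => [->|hne] /=; first by rewrite jc.
      by [].
    have := hsym (C :\ j); rewrite e => /(_ hlt).
    by rewrite big1.
  have : inIpow (V k) 2 a.
    apply: (pow_of (t := j |: U)).
      rewrite inE; apply/andP; split.
        by rewrite subUset sub1set !inE jc /= subsetDl.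
      rewrite eqn_leq hUk andbT cardsU1 jU add1n; exact: hC.
    move=> x; rewrite in_setU1 => /orP[/eqP->|]; [by rewrite aj | exact: hU2].
  by rewrite (negbTE hpow).
set P := [set j | 0 < a j].
have hP : a =1 sqf P.
  by move=> j; rewrite /sqf inE; case: (a j) (h1 j) => [|[|m]].
have PL : P \subset L.
  by apply/subsetP => x; rewrite !inE; apply: contraTneq => ->; rewrite hc.
exists P => //; rewrite inE PL /= eqn_leq; apply/andP; split.
  rewrite leqNgt; apply/negP => hlt.
  have /set0Pn [x xP] : P != set0.
    by rewrite -card_gt0; move: hlt; move: #|P| => p; lia.
  have ax : 0 < a x by move: xP; rewrite inE.
  move/negP: (hmin' x ax); apply.
  have e : decr a x =1 decr (sqf P) x by move=> y; rewrite /decr hP.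
  rewrite (inIsym_ext _ _ e) (inIsym_ext _ _ (decr_ind xP)).
  apply: sym_big; first by apply: subset_trans PL; apply: subsetDl.
  move: hlt; rewrite (cardsD1 x P) xP add1n; move: #|P :\ x| => p; lia.
rewrite ltnNge; apply/negP => hle.
move: hsymb; rewrite (inIsym_ext _ _ hP); apply/negP.
by apply: sym_small => //; lia.
Qed.


Definition fV (s : {set 'I_n.+1}) : {ffun 'I_n.+1 -> 'I_3} := [ffun j => inord (j \in s)].

Lemma fV_val s j : val (fV s j) = sqf s j.
Proof. rewrite ffunE; apply: inordK; by case: (j \in s). Qed.

Lemma fV_inj : injective fV.
Proof.
move=> s t h; apply/setP => j; have := fV_val s j; rewrite h fV_val /sqf.
by case: (j \in s); case: (j \in t).
Qed.

Lemma sdefectV k : 1 < k -> sdefect (V k) 2 = 'C(n, k.+1).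
Proof.
move=> hk; rewrite /sdefect.
have -> : [set a : {ffun 'I_n.+1 -> 'I_3} | mingen_sym (V k) 2 (fun j => val (a j))
      && ~~ inIpow (V k) 2 (fun j => val (a j))] = fV @: V k.+1.
  apply/setP => a; rewrite inE; apply/idP/imsetP.
    case/andP => hm hp.
    have [s hs e] := mingen_char hk (fun j => ltn_ord (a j)) hm hp.
    exists s => //; apply/ffunP => j; apply: val_inj; by rewrite fV_val -e.
  case=> s hs ->.
  rewrite (mingen_ext _ _ (fV_val s)) (inIpow_ext _ _ (fV_val s)).
  move: hs; rewrite inE => /andP[hsL /eqP hs].
  rewrite not_pow // andbT; apply/andP; split; first by apply: sym_big; rewrite // hs.
  apply/forallP => j; apply/implyP => hj.
  have js : j \in s by move: hj; rewrite /sqf; case: (j \in s).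
  rewrite (inIsym_ext _ _ (decr_ind js)); apply: sym_small; first by lia.
  by move: hs; rewrite (cardsD1 j s) js add1n => -[->].
by rewrite card_imset; [rewrite cards_draws cardL | exact: fV_inj].
Qed.

Lemma face_iff t : SRcomplex (edge_gens (star c)) t = (t \subset L) || (t \subset [set c]).
Proof.
rewrite /SRcomplex /inI; apply/idP/idP.
  apply: contraR => /norP[/subsetPn[x xt xL] /subsetPn[v vt vc]].
  have xc : x = c by apply/eqP; move: xL; rewrite !inE negbK.
  have vc' : v != c by move: vc; rewrite inE.
  apply/existsP; exists [set c; v]; apply/andP; split.
    rewrite inE; apply/existsP; exists c; apply/existsP; exists v.
    by rewrite eq_sym vc' /star eqxx (negbTE vc') /= eqxx.
  apply/forallP => j; rewrite /sqf.
  case: (boolP (j \in [set c; v])) => // hj.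
  have -> // : j \in t by move: hj; rewrite !inE => /orP[]/eqP->; rewrite -?xc.
case/orP => ht; apply/existsP => [[s /andP[hsE /forallP hle]]];
  move: hsE; rewrite inE => /existsP[i /existsP[j /and3P[hij hst /eqP hs]]];
  have hi : i \in t by move: (hle i); rewrite /sqf hs !inE eqxx /=; case: (i \in t).
  have hj : j \in t by move: (hle j); rewrite /sqf hs !inE eqxx orbT /=; case: (j \in t).
  move: hst; rewrite /star.
  have := subsetP ht _ hi; have := subsetP ht _ hj; rewrite !inE => /negbTE -> /negbTE ->.
  by [].
have hj : j \in t by move: (hle j); rewrite /sqf hs !inE eqxx orbT /=; case: (j \in t).
move: hij; have := subsetP ht _ hi; have := subsetP ht _ hj; rewrite !inE => /eqP -> /eqP ->.
by rewrite eqxx.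
Qed.

Lemma cdimE : cdim (SRcomplex (edge_gens (star c))) = n.-1.
Proof.
rewrite /cdim.
have -> : \max_(s | SRcomplex (edge_gens (star c)) s) #|s| = maxn 1 n.
  apply/eqP; rewrite eqn_leq; apply/andP; split.
    apply/bigmax_leqP => s; rewrite face_iff => /orP[] /subset_leq_card.
      by rewrite cardL => h; rewrite leq_max h orbT.
    by rewrite cards1 => h; rewrite leq_max h.
  rewrite geq_max; apply/andP; split.
    have := @leq_bigmax_cond _ (fun s => SRcomplex (edge_gens (star c)) s) (fun s => #|s|) [set c].
    by rewrite face_iff subxx orbT cards1; apply.
  have := @leq_bigmax_cond _ (fun s => SRcomplex (edge_gens (star c)) s) (fun s => #|s|) L.
  by rewrite face_iff subxx cardL; apply.
by case: (posnP n) => [->|hn] //; rewrite (maxn_idPr hn).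
Qed.

Lemma iface_eq i : 0 < i -> iface_gens (SRcomplex (edge_gens (star c))) i = V i.+1.
Proof.
move=> hi; apply/setP => s; rewrite !inE face_iff.
case: (eqVneq #|s| i.+1) => [hs|]; rewrite ?andbF ?andbT //.
case: (boolP (s \subset [set c])) => h; rewrite ?orbF ?orbT //.
move/subset_leq_card: h; rewrite cards1 hs; by case: i hi hs.
Qed.

End Star.

Import GRing.Theory.
Local Open Scope ring_scope.

Theorem corollary6p5 (n : nat) (c : 'I_n.+1) :
  mu_poly 2 (SRcomplex (edge_gens (star c))) =
    'X^2 * \sum_(1 <= i < n.-1) ('C(n, i.+2))%:R *: 'X^i
  /\
  mu_poly 2 (SRcomplex (edge_gens (star c))) =
    'X^2 * \sum_(1 <= i < n.-1) (fnum (SRcomplex (edge_gens (star c))) i.+1)%:R *: 'X^i.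
Proof.
have e : forall i, (1 <= i < n.-1)%N ->
    sdefect (iface_gens (SRcomplex (edge_gens (star c))) i) 2 = 'C(n, i.+2)
    /\ fnum (SRcomplex (edge_gens (star c))) i.+1 = 'C(n, i.+2).
  move=> i /andP[hi _]; rewrite /fnum !iface_eq //; split.
    exact: sdefectV.
  by rewrite cards_draws cardL.
rewrite /mu_poly cdimE; split; congr (_ * _); apply: eq_big_nat => i hi;
  by have [h1 h2] := e i hi; rewrite ?h1 ?h2.
Qed.
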